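(* The category of cubes $\widehat{\square}$ (the maximal category of cubes, containing all adjacency-preserving maps) is shell-complete.
   Context: $[0]=\{()\}$, $[n]=\{0,1\}^n$ ($n\ge1$) with the product order. A map $f:[m]\to[n]$ is adjacency-preserving if it is strictly increasing and for $x,y\in[m]$ at Hamming distance $1$, $f(x),f(y)$ are at Hamming distance $1$. $\widehat\square$ is the category with objects $[n]$, $n\ge0$, and all adjacency-preserving maps. For a category $\mathcal A$ of this kind (with objects $[n]$), an $\mathcal A$-set is a presheaf on $\mathcal A$, $\mathcal A[p]=\mathcal A(-,[p])$, $K_{\le1}$ is truncation to the full subcategory on $[0],[1]$, and $\mathrm{cosk}_1^{\mathcal A}$ is the right adjoint to this truncation. $\mathcal A$ is shell-complete if for every $p\ge2$ the canonical map $\mathcal A[p]\to\mathrm{cosk}_1^{\mathcal A}(\mathcal A[p]_{\le1})$ (adjoint to the identity of $\mathcal A[p]_{\le1}$) is an isomorphism. *)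

(* Defs.v *)
From HB Require Import structures.
From mathcomp Require Import all_boot.
Set Implicit Arguments. Unset Strict Implicit. Unset Printing Implicit Defensive.

(* [n] = {0,1}^n ; [0] has exactly one element (the empty function). *)
Definition cube (n : nat) := {ffun 'I_n -> bool}.

Definition cle n (x y : cube n) : bool := [forall i, x i ==> y i].
Definition clt n (x y : cube n) : bool := cle x y && (x != y).
Definition hamming n (x y : cube n) : nat := #|[set i | x i != y i]|.

Definition adjp m n (f : {ffun cube m -> cube n}) : bool :=
  [forall x, forall y, clt x y ==> clt (f x) (f y)] &&
  [forall x, forall y, (hamming x y == 1) ==> (hamming (f x) (f y) == 1)].

Definition Hom m n := {f : {ffun cube m -> cube n} | adjp f}.

Lemma adjp_id n : adjp [ffun x : cube n => x].
Proof.
apply/andP; split; apply/forallP=> x; apply/forallP=> y; rewrite !ffunE;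
  exact/implyP.
Qed.

Lemma adjp_comp m n p (f : {ffun cube m -> cube n}) (g : {ffun cube n -> cube p}) :
  adjp f -> adjp g -> adjp [ffun x => g (f x)].
Proof.
move=> /andP[/forallP Hf1 /forallP Hf2] /andP[/forallP Hg1 /forallP Hg2].
apply/andP; split; apply/forallP=> x; apply/forallP=> y; rewrite !ffunE;
  apply/implyP=> h.
- move/forallP: (Hg1 (f x)) => /(_ (f y)) /implyP; apply.
  by move/forallP: (Hf1 x) => /(_ y) /implyP; apply.
- move/forallP: (Hg2 (f x)) => /(_ (f y)) /implyP; apply.
  by move/forallP: (Hf2 x) => /(_ y) /implyP; apply.
Qed.

Definition idH n : Hom n n := exist (fun f => is_true (adjp f)) _ (adjp_id n).

Definition compH m n p (g : Hom n p) (f : Hom m n) : Hom m p :=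
  exist (fun h => is_true (adjp h)) _ (adjp_comp (proj2_sig f) (proj2_sig g)).

Lemma comp_id_r m n (g : Hom m n) : compH g (idH m) = g.
Proof. by apply: val_inj; apply/ffunP=> x; rewrite /= !ffunE. Qed.

Lemma comp_assoc m n p q (h : Hom p q) (g : Hom n p) (f : Hom m n) :
  compH h (compH g f) = compH (compH h g) f.
Proof. by apply: val_inj; apply/ffunP=> x; rewrite /= !ffunE. Qed.

(* presheaves on the full subcategory of \widehat\square on [0],[1]
   (objects indexed by i : 'I_2, i.e. [0] and [1]) *)
Unset Implicit Arguments.
Record tpsh := TPsh {
  tob : 'I_2 -> Type;
  tact : forall i j : 'I_2, Hom i j -> tob j -> tob i;
  tact_id : forall (i : 'I_2) x, tact i i (idH i) x = x;
  tact_comp : forall (i j k : 'I_2) (f : Hom i j) (g : Hom j k) x,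
      tact i k (compH g f) x = tact i j f (tact j k g x)
}.

Record tnat (X Y : tpsh) := TNat {
  tcomp : forall i : 'I_2, tob X i -> tob Y i;
  tnatural : forall (i j : 'I_2) (f : Hom i j) (x : tob X j),
      tcomp i (tact X i j f x) = tact Y i j f (tcomp j x)
}.
Set Implicit Arguments.
Arguments tact t {i j} _ _.
Arguments tcomp {X Y} t i _.

Definition tnat_comp X Y Z (b : tnat Y Z) (a : tnat X Y) : tnat X Z.
Proof.
refine (@TNat X Z (fun i x => tcomp b i (tcomp a i x)) _).
by move=> i j f x; rewrite !tnatural.
Defined.

(* K_{<=1}(\widehat\square[p]) : truncation of the representable presheaf *)
Definition tyon (p : nat) : tpsh.
Proof.
refine (@TPsh (fun i => Hom i p) (fun i j f g => compH g f) _ _).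
- by move=> i x; exact: comp_id_r.
- by move=> i j k f g x; exact: comp_assoc.
Defined.

Definition tyon_map m n (g : Hom m n) : tnat (tyon m) (tyon n).
Proof.
refine (@TNat (tyon m) (tyon n) (fun i (x : Hom i m) => compH g x) _).
by move=> i j f x /=; rewrite comp_assoc.
Defined.

(* cosk_1 Y, the right adjoint to truncation:
   (cosk_1 Y)_n = Hom(K_{<=1}(\widehat\square[n]), Y), with the
   presheaf action of g : [m] -> [n] given by precomposition. *)
Definition cosk_ob (Y : tpsh) (n : nat) : Type := tnat (tyon n) Y.
Definition cosk_act (Y : tpsh) m n (g : Hom m n) (a : cosk_ob Y n) : cosk_ob Y m :=
  tnat_comp a (tyon_map g).

(* The canonical map \widehat\square[p] -> cosk_1(\widehat\square[p]_{<=1}),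
   adjoint to the identity of \widehat\square[p]_{<=1}; its component at [n]
   sends f : [n] -> [p] to K_{<=1}(f_* ). *)
Definition can_map (p n : nat) (f : Hom n p) : cosk_ob (tyon p) n := tyon_map f.

(* \widehat\square is shell-complete: for every p >= 2 the canonical map is an
   isomorphism of presheaves, i.e. it has a natural two-sided inverse. *)
Definition shell_complete : Prop :=
  forall p : nat, 2 <= p ->
  exists psi : forall n : nat, cosk_ob (tyon p) n -> Hom n p,
    [/\ (forall n (f : Hom n p), psi n (can_map f) = f),
        (forall n (a : cosk_ob (tyon p) n), can_map (psi n a) = a)
      & (forall m n (g : Hom m n) (a : cosk_ob (tyon p) n),
            psi m (cosk_act g a) = compH (psi n a) g)].

(* Main.v *)
From Stdlib Require Import ProofIrrelevance FunctionalExtensionality.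
Require Import Defs.
From mathcomp Require Import all_boot.

Set Implicit Arguments. Unset Strict Implicit. Unset Printing Implicit Defensive.

Lemma cube0_eq (x y : cube 0) : x = y.
Proof. by apply/ffunP => -[]. Qed.

Definition u0 : cube 0 := [ffun _ => false].

Lemma adjp_pt n (x : cube n) : adjp [ffun _ : cube 0 => x].
Proof.
apply/andP; split; apply/forallP=> a; apply/forallP=> b; rewrite (cube0_eq a b).
  by rewrite /clt eqxx andbF.
by rewrite /hamming; apply/implyP; rewrite (_ : [set i | b i != b i] = set0) ?cards0 //;
  apply/setP=> i; rewrite !inE eqxx.
Qed.

Definition pt n (x : cube n) : Hom 0 n := exist (fun f => is_true (adjp f)) _ (adjp_pt x).

Lemma compH_pt m n (g : Hom m n) (x : cube m) : compH g (pt x) = pt (val g x).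
Proof. by apply: val_inj; apply/ffunP=> e; rewrite /= !ffunE. Qed.

Lemma tnat_eq X Y (a b : tnat X Y) :
  (forall i x, tcomp a i x = tcomp b i x) -> a = b.
Proof.
case: a => ca na; case: b => cb nb /= H.
have E : ca = cb.
  apply: functional_extensionality_dep => i; apply: functional_extensionality => x; exact: H.
subst cb; f_equal; apply: proof_irrelevance.
Qed.

Section V.
Variables (p n : nat) (a : cosk_ob (tyon p) n).

Definition vmap : {ffun cube n -> cube p} :=
  [ffun x => val (tcomp a ord0 (pt x)) u0].

Lemma key (i : 'I_2) (x : Hom i n) (e : cube i) :
  val (tcomp a i x) e = vmap (val x e).
Proof.
have := @tnatural _ _ a ord0 i (pt e) x.
rewrite /= ffunE.
have -> : compH x (pt e) = pt (val x e) by exact: compH_pt.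
move=> ->; by rewrite /= !ffunE.
Qed.
End V.

Lemma cube1E (b : cube 1) : b = [ffun _ => b ord0].
Proof. by apply/ffunP=> i; rewrite ffunE (ord1 i). Qed.

Lemma cle1 (b b' : cube 1) : cle b b' = (b ord0 ==> b' ord0).
Proof.
rewrite /cle; apply/forallP/idP => [H|H i]; [exact: H | by rewrite (ord1 i)].
Qed.

Lemma eq1 (b b' : cube 1) : (b == b') = (b ord0 == b' ord0).
Proof.
apply/eqP/eqP => [->//|h]; by rewrite (cube1E b) (cube1E b') h.
Qed.

Lemma ham1 (b b' : cube 1) : hamming b b' = (b ord0 != b' ord0).
Proof.
rewrite /hamming.
have -> : [set i | b i != b' i] = if b ord0 != b' ord0 then [set ord0] else set0.
  apply/setP=> i; rewrite (ord1 i) inE; case: ifP => h; by rewrite ?inE ?eqxx ?h.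
by case: ifP; rewrite ?cards1 ?cards0.
Qed.

Lemma ham_sym n (x y : cube n) : hamming x y = hamming y x.
Proof. by rewrite /hamming; apply: eq_card => i; rewrite !inE eq_sym. Qed.

Definition b0 : cube 1 := [ffun _ => false].
Definition b1 : cube 1 := [ffun _ => true].

Lemma clt_b01 : clt b0 b1.
Proof. by rewrite /clt cle1 eq1 !ffunE. Qed.
Lemma ham_b01 : hamming b0 b1 == 1.
Proof. by rewrite ham1 !ffunE. Qed.

Lemma adjp_edge n (x y : cube n) : clt x y -> hamming x y == 1 ->
  adjp [ffun b : cube 1 => if b ord0 then y else x].
Proof.
move=> hxy hh.
apply/andP; split; apply/forallP=> b; apply/forallP=> b'; apply/implyP; rewrite !ffunE.
  rewrite /clt cle1 eq1; case: (b ord0); case: (b' ord0) => //.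
rewrite ham1; case: (b ord0); case: (b' ord0) => //; by rewrite ham_sym.
Qed.

Definition edge n (x y : cube n) (hxy : clt x y) (hh : hamming x y == 1) : Hom 1 n :=
  exist (fun f => is_true (adjp f)) _ (adjp_edge hxy hh).

Lemma cle_trans n (x y z : cube n) : cle x y -> cle y z -> cle x z.
Proof.
move=> /forallP h1 /forallP h2; apply/forallP=> i; apply/implyP=> hx.
by move/implyP: (h2 i); apply; move/implyP: (h1 i); apply.
Qed.

Lemma cle_anti n (x y : cube n) : cle x y -> cle y x -> x = y.
Proof.
move=> /forallP h1 /forallP h2; apply/ffunP=> i.
by move: (h1 i) (h2 i); case: (x i); case: (y i).
Qed.

Lemma ham1_clt n (x y : cube n) : hamming x y == 1 -> clt x y || clt y x.
Proof.
rewrite /hamming => /cards1P [i Hi].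
have hi : x i != y i by have := set11 i; rewrite -Hi inE.
have ho : forall j, j != i -> x j = y j.
  move=> j hj; apply/eqP; apply/negPn; apply/negP => hd.
  have : j \in [set i | x i != y i] by rewrite inE.
  by rewrite Hi inE (negbTE hj).
have neq : x != y by apply/eqP => e; move: hi; rewrite e eqxx.
move: hi; case hx: (x i); case hy: (y i) => // _.
- apply/orP; right; rewrite /clt eq_sym neq andbT; apply/forallP=> j.
  case: (eqVneq j i) => [->|/ho ->]; by rewrite ?hx ?hy ?implybb.
- apply/orP; left; rewrite /clt neq andbT; apply/forallP=> j.
  case: (eqVneq j i) => [->|/ho ->]; by rewrite ?hx ?hy ?implybb.
Qed.

Section V2.
Variables (p n : nat) (a : cosk_ob (tyon p) n).

Lemma edge_v (x y : cube n) : clt x y -> hamming x y == 1 ->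
  clt (vmap a x) (vmap a y) && (hamming (vmap a x) (vmap a y) == 1).
Proof.
move=> hxy hh.
set E := edge hxy hh.
have ex : vmap a x = val (tcomp a (@Ordinal 2 1 isT) E) b0 by rewrite key /= !ffunE.
have ey : vmap a y = val (tcomp a (@Ordinal 2 1 isT) E) b1 by rewrite key /= !ffunE.
rewrite ex ey.
have := proj2_sig (tcomp a (@Ordinal 2 1 isT) E) => /andP[/forallP H1 /forallP H2].
apply/andP; split.
  by move/forallP: (H1 b0) => /(_ b1) /implyP; apply; exact: clt_b01.
by move/forallP: (H2 b0) => /(_ b1) /implyP; apply; exact: ham_b01.
Qed.

Lemma step (x y : cube n) : clt x y ->
  exists z, [/\ clt x z, hamming x z == 1, cle z y & (z = y \/ hamming z y < hamming x y)].
Proof.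
move=> /andP[hle hne].
have [i hi] : exists i, x i != y i.
  case: (pickP (fun i => x i != y i)) => [i hi|h]; first by exists i.
  by move: hne; rewrite (_ : x = y) ?eqxx //; apply/ffunP=> j; apply/eqP; move: (h j) => /negbFE.
have hxi : x i = false /\ y i = true.
  by move/forallP: hle => /(_ i); move: hi; case: (x i); case: (y i).
case: hxi => hxi hyi.
pose z : cube n := [ffun j => if j == i then true else x j].
have Hxz : [set j | x j != z j] = [set i].
  apply/setP=> j; rewrite !inE ffunE; case: (eqVneq j i) => [->|hji]; by rewrite ?eqxx ?hxi ?(negbTE hji).
exists z; split.
- rewrite /clt; apply/andP; split.
    apply/forallP=> j; rewrite ffunE; case: (j == i); by rewrite ?implybT ?implybb.
  apply/eqP=> e; have := congr1 (fun f : cube n => f i) e; by rewrite /= ffunE eqxx hxi.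
- by rewrite /hamming Hxz cards1.
- apply/forallP=> j; rewrite ffunE; case: (eqVneq j i) => [->|_]; first by rewrite hyi.
  by move/forallP: hle; apply.
- right; rewrite /hamming.
  have -> : [set j | x j != y j] = i |: [set j | z j != y j].
    apply/setP=> j; rewrite !inE ffunE; case: (eqVneq j i) => [->|hji]; by rewrite ?eqxx ?hxi ?hyi ?(negbTE hji).
  rewrite cardsU1 inE ffunE eqxx hyi /=; exact: ltnSn.
Qed.

Lemma clt_trans' m (x y z : cube m) : clt x z -> clt z y -> clt x y.
Proof.
move=> /andP[h1 n1] /andP[h2 n2]; rewrite /clt (cle_trans h1 h2) /=.
apply/eqP=> e; subst y; by move: n1; rewrite (cle_anti h1 h2) eqxx.
Qed.

Lemma vmap_incr_k k (x y : cube n) : hamming x y <= k -> clt x y -> clt (vmap a x) (vmap a y).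
Proof.
elim: k x y => [|k IH] x y hk hxy; case/step: (hxy) => z [hxz hz hzy [<-|hlt]];
  try by case/andP: (edge_v hxz hz).
  by move: (leq_trans hlt hk).
case: (eqVneq z y) => [<-|nzy]; first by case/andP: (edge_v hxz hz).
have czy : clt z y by rewrite /clt hzy nzy.
case/andP: (edge_v hxz hz) => cxz _.
apply: (clt_trans' cxz); apply: IH czy; by rewrite -ltnS (leq_trans hlt hk).
Qed.

Lemma adjp_vmap : adjp (vmap a).
Proof.
apply/andP; split; apply/forallP=> x; apply/forallP=> y; apply/implyP=> h.
  exact: (vmap_incr_k (leqnn _) h).
case/orP: (ham1_clt h) => c.
  by case/andP: (edge_v c h).
by rewrite ham_sym in h; case/andP: (edge_v c h); rewrite ham_sym.
Qed.
End V2.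

Definition psi p n (a : cosk_ob (tyon p) n) : Hom n p :=
  exist (fun f => is_true (adjp f)) _ (adjp_vmap a).

Theorem theorem7p5 :
  forall p : nat, 2 <= p ->
  exists psi : forall n : nat, cosk_ob (tyon p) n -> Hom n p,
    [/\ (forall n (f : Hom n p), psi n (can_map f) = f),
        (forall n (a : cosk_ob (tyon p) n), can_map (psi n a) = a)
      & (forall m n (g : Hom m n) (a : cosk_ob (tyon p) n),
            psi m (cosk_act g a) = compH (psi n a) g)].
Proof.
move=> p _; exists (@psi p); split.
- move=> n f; apply: val_inj; apply/ffunP=> x; by rewrite /= !ffunE.
- move=> n a; apply: tnat_eq => i x /=; apply: val_inj; apply/ffunP=> e.
  by rewrite /= ffunE key.
- move=> m n g a; apply: val_inj; apply/ffunP=> x; rewrite /= !ffunE.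
  by rewrite /cosk_act /= compH_pt.
Qed.
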